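(* Let $0\le\ell\le n$ and $\mu\in P^+_{\ell,n}$. For $1\le r\le n-1$ let $A_r,D_r$ be the components of $A,D$ of total degree $r$ in $\omega_2,\omega_4,\omega_6$. Then \[ A_rv_\mu=\sum_{\substack{\lambda\in P^+_{\ell,n}\\ \lambda/\mu=b,\ |b|=r}}\Omega(b)\,v_\lambda,\qquad D_rv_\mu=\sum_{\substack{\lambda\in P^+_{\ell,n}\\ \mu/\lambda=b,\ |b|=n-r}}\overline{\Omega}(b)\,v_\lambda, \] where the sums run over $\lambda\in P^+_{\ell,n}$ such that $\lambda/\mu$ (resp. $\mu/\lambda$) is a broken rim hook $b$ of length $r$ (resp. $n-r$). The first formula also holds for $A_0$ and the second for $D_n$, where the empty skew diagram ($\lambda=\mu$) is admitted as a broken rim hook.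
   Context: Let $V=\mathbb{C}v_0\oplus\mathbb{C}v_1$, $e_{ab}$ the matrix units ($e_{ab}v_c=\delta_{bc}v_a$). For indeterminates $\omega=(\omega_1,\dots,\omega_6)$ let $R(\omega)=e_{00}\otimes(\omega_1e_{00}+\omega_3e_{11})+e_{01}\otimes\omega_5e_{10}+e_{10}\otimes\omega_6e_{01}+e_{11}\otimes(\omega_4e_{00}+\omega_2e_{11})\in\operatorname{End}(V\otimes V)\otimes\mathbb{C}[\omega]$. On $V_0\otimes V^{\otimes n}$ ($V_0$ an auxiliary copy of $V$) let $T(\omega)=R_{0n}(\omega)\cdots R_{01}(\omega)$ and write $T=e_{00}\otimes A+e_{01}\otimes B+e_{10}\otimes C+e_{11}\otimes D$. For a binary string $\sigma\in\{0,1\}^n$ with 1's exactly at positions $i_1<\dots<i_\ell$, $v_\sigma=v_{\sigma_1}\otimes\cdots\otimes v_{\sigma_n}$ is labelled $v_\lambda$ with $\lambda=(i_\ell-\ell,i_{\ell-1}-(\ell-1),\dots,i_1-1)\in P^+_{\ell,n}$, the partitions with at most $\ell$ parts, all $\le n-\ell$. A broken rim hook is a skew diagram $b=\lambda/\mu$ ($\mu\subset\lambda$) containing no $2\times2$ block of boxes; its edge-connected components are (connected) rim hooks $h$, $\#b$ is their number, $|b|$ the number of boxes, $r(h)$, $c(h)$ the numbers of rows and columns $h$ occupies. For $\lambda,\mu\in P^+_{\ell,n}$, $\bar r(b)$ is the number of rows $1\le i\le\ell$ containing no box of $b$ and $\bar c(b)$ the number of columns $1\le j\le n-\ell$ containing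 no box of $b$. Set $\Omega(b)=\Omega(b;\omega)=\omega_1^{\bar c(b)}\omega_3^{\bar r(b)}(\omega_5\omega_6)^{\#b}\prod_{h\in b}\omega_2^{r(h)-1}\omega_4^{c(h)-1}$ and $\overline{\Omega}(b;\omega_1,\dots,\omega_6)=\Omega(b;\omega_4,\omega_3,\omega_2,\omega_1,\omega_6,\omega_5)$. *)

(* Defs.v *)
From mathcomp Require Import all_boot all_algebra mpoly.
Set Implicit Arguments.
Unset Strict Implicit.
Unset Printing Implicit Defensive.
Import GRing.Theory.
Local Open Scope ring_scope.

(* Coefficient ring C[omega] = {mpoly R[6]}; omega_j is 'X_(j-1). *)
Definition omega (R : numClosedFieldType) (j : nat) : {mpoly R[6]} :=
  'X_(inord j.-1).

(* Binary strings of length n (v_0 <-> false, v_1 <-> true). *)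
Definition bstring (n : nat) := {ffun 'I_n -> bool}.

(* Entry <a c | R(omega) | b d>, first tensor factor = auxiliary space.   *)
(* R = e00(x)(w1 e00 + w3 e11) + e01(x)w5 e10 + e10(x)w6 e01             *)
(*     + e11(x)(w4 e00 + w2 e11),  e_{ab} v_c = delta_{bc} v_a.           *)
Definition Rentry (R : numClosedFieldType) (a c b d : bool) : {mpoly R[6]} :=
  match a, c, b, d with
  | false, false, false, false => omega R 1
  | false, true,  false, true  => omega R 3
  | false, true,  true,  false => omega R 5
  | true,  false, false, true  => omega R 6
  | true,  false, true,  false => omega R 4
  | true,  true,  true,  true  => omega R 2
  | _, _, _, _ => 0
  end.

(* Operators on V_0 (x) V^{(x)n}, as matrices indexed by the finite basis *)
(* (aux bit, string); M x y = coefficient of basis vector x in M(e_y).    *)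
Definition auxop (R : numClosedFieldType) (n : nat) :=
  (bool * bstring n)%type -> (bool * bstring n)%type -> {mpoly R[6]}.

Definition auxmul (R : numClosedFieldType) (n : nat) (M N : auxop R n)
  : auxop R n := fun x y => \sum_(z : bool * bstring n) M x z * N z y.

Definition auxid (R : numClosedFieldType) (n : nat) : auxop R n :=
  fun x y => (x == y)%:R.

Definition R0 (R : numClosedFieldType) (n : nat) (i : 'I_n) : auxop R n :=
  fun x y => Rentry R x.1 (x.2 i) y.1 (y.2 i) *
             ([forall j : 'I_n, (j != i) ==> (x.2 j == y.2 j)])%:R.

(* Monodromy T = R_{0n} ... R_{01} (R_{01} applied first). *)
Definition Tmon (R : numClosedFieldType) (n : nat) : auxop R n :=
  foldl (fun acc i => auxmul (R0 R i) acc) (@auxid R n) (enum 'I_n).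

(* T = e00 (x) A + e01 (x) B + e10 (x) C + e11 (x) D. *)
Definition Aop (R : numClosedFieldType) (n : nat) (s t : bstring n)
  : {mpoly R[6]} := @Tmon R n (false, s) (false, t).
Definition Dop (R : numClosedFieldType) (n : nat) (s t : bstring n)
  : {mpoly R[6]} := @Tmon R n (true, s) (true, t).

(* Component of total degree r in omega_2, omega_4, omega_6              *)
(* (i.e. in the variables 'X_1, 'X_3, 'X_5).                              *)
Definition deg246 (m : 'X_{1..6}) : nat := (\sum_(i < 6 | odd i) m i)%N.
Definition comp246 (R : numClosedFieldType) (r : nat) (p : {mpoly R[6]})
  : {mpoly R[6]} :=
  \sum_(m <- msupp p | deg246 m == r) p@_m *: 'X_[m].

Definition opapply (R : numClosedFieldType) (n : nat)
  (M : bstring n -> bstring n -> {mpoly R[6]}) (v : {ffun bstring n -> {mpoly R[6]}})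
  : {ffun bstring n -> {mpoly R[6]}} :=
  [ffun s => \sum_(t : bstring n) M s t * v t].

(* Label of a binary string: ones at positions i_1 < ... < i_l (1-based), *)
(* lambda = (i_l - l, i_{l-1} - (l-1), ..., i_1 - 1) as a seq of size l.  *)
Definition ones (n : nat) (s : bstring n) : seq nat :=
  [seq (val i).+1 | i <- enum 'I_n & s i].
Definition label (n : nat) (s : bstring n) : seq nat :=
  let p := ones s in let l := size p in
  [seq (nth 0 p (l - k) - (l - k).+1)%N | k <- iota 1 l].

(* P^+_{l,n}: partitions with (at most) l parts (padded with zeros to    *)
(* length exactly l), all parts <= n - l, written as nonincreasing seqs.  *)
Definition Pplus (l n : nat) : seq (seq nat) :=
  [seq lam <- [seq [seq val i | i <- tval t] | t <- enum {: l.-tuple 'I_(n - l).+1}]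
     | sorted geq lam].

(* The basis vector v_lambda (= v_sigma for the string sigma labelled lambda). *)
Definition vlab (R : numClosedFieldType) (n : nat) (lam : seq nat)
  : {ffun bstring n -> {mpoly R[6]}} := [ffun s => (label s == lam)%:R].

(* Skew diagrams lam/mu, boxes (i,j) 0-indexed, i < l (rows), j < n - l. *)

Definition subpart (mu lam : seq nat) : bool :=
  all (fun k => nth 0 mu k <= nth 0 lam k)%N (iota 0 (size lam)).

Definition skewd (l n : nat) (lam mu : seq nat) : {set 'I_l * 'I_(n - l)} :=
  [set x : 'I_l * 'I_(n - l) | (nth 0 mu x.1 <= x.2 < nth 0 lam x.1)%N].

Definition broken_rim_hook (l n : nat) (b : {set 'I_l * 'I_(n - l)}) : bool :=
  ~~ [exists x : 'I_l * 'I_(n - l), exists y : 'I_l * 'I_(n - l),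
        [&& val y.1 == (val x.1).+1, val y.2 == (val x.2).+1,
            x \in b, y \in b, (x.1, y.2) \in b & (y.1, x.2) \in b]].

Definition badj (l n : nat) (b : {set 'I_l * 'I_(n - l)})
  : rel ('I_l * 'I_(n - l)) :=
  fun x y => [&& x \in b, y \in b &
    ((val x.1 == val y.1) && ((val x.2 == (val y.2).+1) || (val y.2 == (val x.2).+1)))
    || ((val x.2 == val y.2) && ((val x.1 == (val y.1).+1) || (val y.1 == (val x.1).+1)))].

Definition components (l n : nat) (b : {set 'I_l * 'I_(n - l)})
  : {set {set 'I_l * 'I_(n - l)}} :=
  [set [set y in b | connect (badj b) x y] | x in b].

Definition nrows (l n : nat) (h : {set 'I_l * 'I_(n - l)}) : nat :=
  #|[set x.1 | x in h]|.
Definition ncols (l n : nat) (h : {set 'I_l * 'I_(n - l)}) : nat :=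
  #|[set x.2 | x in h]|.

Definition rbar (l n : nat) (b : {set 'I_l * 'I_(n - l)}) : nat :=
  #|[set i : 'I_l | [forall x in b, x.1 != i]]|.
Definition cbar (l n : nat) (b : {set 'I_l * 'I_(n - l)}) : nat :=
  #|[set j : 'I_(n - l) | [forall x in b, x.2 != j]]|.

Definition OmegaGen (R : numClosedFieldType) (w1 w2 w3 w4 w5 w6 : {mpoly R[6]})
  (l n : nat) (b : {set 'I_l * 'I_(n - l)}) : {mpoly R[6]} :=
  w1 ^+ cbar b * w3 ^+ rbar b * (w5 * w6) ^+ #|components b| *
  \prod_(h in components b) (w2 ^+ (nrows h).-1 * w4 ^+ (ncols h).-1).

Definition Omega (R : numClosedFieldType) (l n : nat) (b : {set 'I_l * 'I_(n - l)}) :=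
  OmegaGen (omega R 1) (omega R 2) (omega R 3) (omega R 4) (omega R 5) (omega R 6) b.

Definition Omegabar (R : numClosedFieldType) (l n : nat) (b : {set 'I_l * 'I_(n - l)}) :=
  OmegaGen (omega R 4) (omega R 3) (omega R 2) (omega R 1) (omega R 6) (omega R 5) b.

Definition is_brh (l n : nat) (lam mu : seq nat) (r : nat) : bool :=
  [&& subpart mu lam, broken_rim_hook (skewd l n lam mu) & #|skewd l n lam mu| == r].

(* Main.v *)
Require Import Defs.
From mathcomp Require Import all_boot all_algebra mpoly.
From mathcomp Require Import zify ring.
Set Implicit Arguments.
Unset Strict Implicit.
Unset Printing Implicit Defensive.
Import GRing.Theory.

Section Counting.

Definition cnt (f : nat -> bool) (m : nat) : nat := \sum_(i < m) (f i : nat).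

Lemma cnt0 f : cnt f 0 = 0. Proof. by rewrite /cnt big_ord0. Qed.
Lemma cntS f m : cnt f m.+1 = cnt f m + f m.
Proof. by rewrite /cnt big_ord_recr. Qed.
Lemma cnt_le f m : cnt f m <= m.
Proof. elim: m => [|m IH]; rewrite ?cnt0 // cntS; case: (f m) => /=; lia. Qed.
Lemma cnt_mono f m m' : m <= m' -> cnt f m <= cnt f m'.
Proof.
move=> h; rewrite -(subnKC h); elim: (m' - m) => [|k IH]; first by rewrite addn0.
rewrite addnS cntS; lia.
Qed.
Lemma cnt_lip f m m' : m <= m' -> cnt f m' <= cnt f m + (m' - m).
Proof.
move=> h; rewrite -(subnKC h); elim: (m' - m) => [|k IH]; first by rewrite !addn0 subnn addn0.
rewrite addnS cntS; case: (f (m + k)) => /=; lia.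
Qed.

End Counting.

Lemma sum_cnt (f : nat -> bool) (Q : nat -> bool) m :
  \sum_(i < m) (f i && Q (cnt f i) : nat) = \sum_(j < cnt f m) (Q j : nat).
Proof.
elim: m => [|m IH]; first by rewrite big_ord0 cnt0 big_ord0.
rewrite big_ord_recr /= IH cntS; case: (f m) => /=; last by rewrite !addn0.
by rewrite addn1 big_ord_recr.
Qed.

Lemma balance (a : nat -> bool) m :
  \sum_(i < m) (~~ a i && a i.+1 : nat) + a 0 = \sum_(i < m) (a i && ~~ a i.+1 : nat) + a m.
Proof.
elim: m => [|m IH]; first by rewrite !big_ord0.
rewrite !big_ord_recr /=.
move: IH; case: (a m); case: (a m.+1) => /=; lia.
Qed.


Section Transfer.
Local Open Scope ring_scope.
Variable R : numClosedFieldType.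
Variable n : nat.

Definition bit (x : bstring n) (i : nat) : bool :=
  [exists j : 'I_n, (nat_of_ord j == i) && x j].

Lemma bitE x (j : 'I_n) : bit x j = x j.
Proof.
apply/existsP/idP => [[j' /andP[/eqP h hx]]|hx]; last by exists j; rewrite eqxx.
by have <- : j' = j by apply: val_inj.
Qed.

Lemma bit_out x i : (n <= i)%N -> bit x i = false.
Proof.
move=> h; apply/existsP => [[j /andP[/eqP hj _]]].
by move: (ltn_ord j); rewrite hj ltnNge h.
Qed.

Fixpoint Wf (s t : bstring n) (b : bool) (k : nat) (a : bool) : {mpoly R[6]} :=
  match k with
  | 0 => (a == b)%:R
  | k'.+1 => \sum_(a' : bool) Rentry R a (bit s k') a' (bit t k') * Wf s t b k' a'
  end.

Lemma Wf_ext s s' t b k a : (forall i, (i < k)%N -> bit s i = bit s' i) ->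
  Wf s t b k a = Wf s' t b k a.
Proof.
elim: k a => [|k IH] a h //=.
apply: eq_bigr => a' _; rewrite h // IH // => i hi; apply: h; lia.
Qed.

Definition step (acc : auxop R n) (i : 'I_n) := auxmul (R0 R i) acc.

Lemma transfer_gen k a u b t : (k <= n)%N ->
  foldl step (@auxid R n) (take k (enum 'I_n)) (a, u) (b, t) =
  ([forall j : 'I_n, (k <= j)%N ==> (u j == t j)] : nat)%:R * Wf u t b k a.
Proof.
elim: k a u => [|k IH] a u hk.
  rewrite take0 /= /auxid.
  have -> : ((a, u) == (b, t)) = (a == b) && (u == t) by [].
  have -> : (u == t) = [forall j : 'I_n, (0 <= j)%N ==> (u j == t j)].
    apply/eqP/forallP => [-> j|h]; first by rewrite eqxx implybT.
    by apply/ffunP => j; move: (h j); rewrite leq0n /= => /eqP.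
  by rewrite -mulnb natrM mulrC.
have hkn : (k < n)%N by [].
have i0 : 'I_n by exact: Ordinal hkn.
rewrite (take_nth i0); last by rewrite size_enum_ord.
rewrite foldl_rcons.
set i := nth i0 (enum 'I_n) k.
have hi : nat_of_ord i = k by rewrite /i nth_enum_ord.
rewrite /step /auxmul.
set F := fun (a' : bool) (w : bstring n) => R0 R i (a, u) (a', w) *
   foldl (fun acc i => auxmul (R0 R i) acc) (@auxid R n) (take k (enum 'I_n)) (a', w) (b, t).
rewrite (eq_bigr (fun p => F p.1 p.2)); last by case.
rewrite -(pair_bigA _ F) /= /F.
set ws := [ffun j => if j == i then t i else u j].
have E : forall a', \sum_(w : bstring n) R0 R i (a, u) (a', w) *
    foldl (fun acc i => auxmul (R0 R i) acc) (@auxid R n) (take k (enum 'I_n)) (a', w) (b, t)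
  = ([forall j : 'I_n, (k.+1 <= j)%N ==> (u j == t j)] : nat)%:R *
    (Rentry R a (u i) a' (t i) * Wf u t b k a').
  move=> a'; rewrite (bigD1 ws) //= big1 ?addr0.
    rewrite IH; last by lia.
    rewrite /R0 /= ffunE eqxx.
    have -> : [forall j : 'I_n, (j != i) ==> (u j == ws j)].
      by apply/forallP => j; rewrite ffunE; case: (j == i) => //=; rewrite eqxx.
    rewrite mulr1 mulrCA; congr (_%:R * (_ * _)).
      congr nat_of_bool.
      apply/forallP/forallP => h j; move: (h j); rewrite ffunE.
        case: (eqVneq j i) => [->|hne]; first by rewrite hi ltnn.
        by move=> hh; apply/implyP => hj; apply: (implyP hh); lia.
      case: (eqVneq j i) => [->|hne]; first by rewrite eqxx implybT.
      move=> hh; apply/implyP => hj; apply: (implyP hh).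
      have : nat_of_ord j != k by rewrite -hi; apply: contra hne => /eqP hh2; apply/eqP/val_inj.
      lia.
    apply: Wf_ext => i' hi'; have hi'n : (i' < n)%N by lia.
    rewrite -[i']/(nat_of_ord (Ordinal hi'n)) !bitE ffunE.
    case: (eqVneq (Ordinal hi'n) i) => // he; exfalso; move: (f_equal val he) => /=; lia.
  move=> w hw; rewrite IH; last by lia.
  rewrite /R0 /=.
  case: (boolP [forall j : 'I_n, (j != i) ==> (u j == w j)]) => h1; last by rewrite /= mulr0n !(mulr0, mul0r).
  case: (boolP [forall j : 'I_n, (k <= j)%N ==> (w j == t j)]) => h2; last by rewrite /= mulr0n !(mulr0, mul0r).
  exfalso; move/eqP: hw; apply; apply/ffunP => j; rewrite ffunE.
  case: eqP => [->|hne].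
    by move: (forallP h2 i); rewrite hi leqnn => /eqP.
  by move: (forallP h1 j); move/eqP: hne => -> /= /eqP.
rewrite (eq_bigr _ (fun a' _ => E a')) -mulr_sumr /=.
by rewrite -hi !bitE.
Qed.

Lemma transfer a u b t : @Tmon R n (a, u) (b, t) = Wf u t b n a.
Proof.
rewrite /Tmon -(take_size (enum 'I_n)) size_enum_ord.
have := @transfer_gen n a u b t (leqnn n); rewrite /step => ->.
have -> : [forall j : 'I_n, (n <= j)%N ==> (u j == t j)].
  by apply/forallP => j; rewrite leqNgt ltn_ord.
by rewrite mul1r.
Qed.

End Transfer.


Definition ty (a x y : bool) : nat :=
  match a, x, y with
  | false, false, false => 1
  | false, true, true => 3
  | true, false, true => 5
  | false, true, false => 6
  | true, false, false => 4
  | true, true, true => 2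
  | _, _, _ => 0
  end.

Section Closed.
Local Open Scope ring_scope.
Variable R : numClosedFieldType.
Variable n : nat.
Variables s t : bstring n.

Definition SS i := cnt (bit s) i.
Definition TT i := cnt (bit t) i.
Definition auxb (b : bool) i := (SS i < b + TT i)%N.
Definition okb (b : bool) k := all (fun i => SS i <= b + TT i <= SS i + 1)%N (iota 0 k.+1).
Definition tyi b i := ty (auxb b i) (bit t i) (bit s i).

Lemma Rentry_char (a sk c tk : bool) : Rentry R a sk c tk =
  if (sk <= c + tk <= sk + 1)%N && (a == (sk < c + tk)%N) then omega R (ty c tk sk) else 0.
Proof. by case: a; case: sk; case: c; case: tk. Qed.

Lemma step_eq (S T b sk tk : nat) (a c : bool) : b + T = S + c ->
  ((S + sk <= b + (T + tk) <= S + sk + 1) && (a == (S + sk < b + (T + tk))))%N =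
  ((sk <= c + tk <= sk + 1) && (a == (sk < c + tk)))%N.
Proof.
move=> h; have -> : (b + (T + tk) = S + (c + tk))%N by lia.
by rewrite -addnA !leq_add2l ltn_add2l.
Qed.

Lemma okbS b k : okb b k.+1 = okb b k && (SS k.+1 <= b + TT k.+1 <= SS k.+1 + 1)%N.
Proof. by rewrite /okb -(addn1 k.+1) iotaD all_cat /= andbT add0n addn1. Qed.

Lemma okb_last b k : okb b k -> (SS k <= b + TT k <= SS k + 1)%N.
Proof. by move/allP; apply; rewrite mem_iota /=; lia. Qed.

Lemma Wf_closed b k a : Wf R s t b k a =
  if okb b k && (a == auxb b k) then \prod_(i < k) omega R (tyi b i) else 0.
Proof.
elim: k a => [|k IH] a.
  rewrite /= big_ord0 /okb /auxb /SS /TT /= !cnt0.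
  by case: a; case: b; rewrite /= ?mulr1n ?mulr0n.
change (Wf R s t b k.+1 a) with (\sum_(a' : bool) Rentry R a (bit s k) a' (bit t k) * Wf R s t b k a').
rewrite big_bool /= !IH.
case hok: (okb b k); last first.
  by rewrite okbS hok /= !mulr0 addr0.
have hk := okb_last hok.
rewrite okbS hok /= big_ord_recr /=.
set P := \prod_(i < k) _.
have hc : (b + TT k = SS k + auxb b k)%N by move: hk; rewrite /auxb; case: (SS k < b + TT k)%N /idP => /=; lia.
have E : (SS k.+1 <= b + TT k.+1 <= SS k.+1 + 1)%N && (a == auxb b k.+1) =
   ((bit s k <= auxb b k + bit t k <= bit s k + 1) && (a == (bit s k < auxb b k + bit t k)))%N.
  by rewrite /auxb /SS /TT !cntS -/(SS k) -/(TT k) -(step_eq _ _ _ hc) /SS /TT.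
rewrite E /tyi; case: (auxb b k) => /=; rewrite ?mulr0 ?add0r ?addr0 Rentry_char;
  case: ifP => _; by rewrite ?mul0r // mulrC.
Qed.

End Closed.


Section FilterIota.
Variable f : nat -> bool.

Lemma size_filter_iota m : size (filter f (iota 0 m)) = cnt f m.
Proof.
elim: m => [|m IH]; first by rewrite cnt0.
by rewrite -addn1 iotaD filter_cat size_cat IH /= addn1 cntS; case: (f m).
Qed.

Lemma nth_filter_iota m j : j < cnt f m ->
  let q := nth 0 (filter f (iota 0 m)) j in [/\ f q, cnt f q = j & q < m].
Proof.
elim: m j => [|m IH] j; first by rewrite cnt0.
rewrite -[m.+1]addn1 iotaD filter_cat nth_cat size_filter_iota add0n addn1 cntS => hj.
case: ltnP => h.
  by have [h1 h2 h3] := IH j h; split => //; lia.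
case hf: (f m) hj => /= hj; last by lia.
have -> : j - cnt f m = 0 by lia.
by rewrite hf /=; split => //; lia.
Qed.

End FilterIota.

Section Label.
Variable n : nat.

Lemma ones_eq (x : bstring n) : ones x = map S (filter (bit x) (iota 0 n)).
Proof.
rewrite /ones -val_enum_ord filter_map -map_comp; congr map.
by apply: eq_filter => i; rewrite /preim /= bitE.
Qed.

Lemma size_label (x : bstring n) : size (label x) = cnt (bit x) n.
Proof. by rewrite /label size_map size_iota ones_eq size_map size_filter_iota. Qed.

Definition qpos (x : bstring n) j := nth 0 (filter (bit x) (iota 0 n)) j.

Lemma nth_label (x : bstring n) k : k < cnt (bit x) n ->
  nth 0 (label x) k = qpos x (cnt (bit x) n - 1 - k) - (cnt (bit x) n - 1 - k).
Proof.
move=> hk.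
rewrite /label (nth_map 0); last by rewrite size_iota ones_eq size_map size_filter_iota.
rewrite nth_iota; last by rewrite ones_eq size_map size_filter_iota.
rewrite ones_eq size_map size_filter_iota (nth_map 0); last by rewrite size_filter_iota; lia.
have -> : cnt (bit x) n - (1 + k) = cnt (bit x) n - 1 - k by lia.
rewrite /qpos; lia.
Qed.

Lemma label_le (x : bstring n) k c : k < cnt (bit x) n ->
  (nth 0 (label x) k <= c) = (cnt (bit x) n - 1 - k < cnt (bit x) (cnt (bit x) n - 1 - k + c + 1)).
Proof.
move=> hk; rewrite nth_label //.
set j := cnt (bit x) n - 1 - k.
have hj : j < cnt (bit x) n by rewrite /j; lia.
have [h1 h2 h3] := nth_filter_iota hj.
rewrite -/(qpos x j) in h1 h2 h3.
have hqj : j <= qpos x j by rewrite -{1}h2; apply: cnt_le.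
apply/idP/idP => h.
  have : cnt (bit x) (qpos x j).+1 <= cnt (bit x) (j + c + 1) by apply: cnt_mono; lia.
  rewrite cntS h1 h2; lia.
apply/negPn/negP => hn.
have : cnt (bit x) (j + c + 1) <= cnt (bit x) (qpos x j) by apply: cnt_mono; lia.
lia.
Qed.

End Label.

Lemma sum_lt_min L v : \sum_(j < L) (j < v : nat) = minn v L.
Proof.
elim: L => [|L IH]; first by rewrite big_ord0 minn0.
rewrite big_ord_recr /= IH; case: ltnP => h; lia.
Qed.

Lemma sum_ge L a : \sum_(j < L) (a <= j : nat) = L - a.
Proof.
elim: L => [|L IH]; first by rewrite big_ord0.
rewrite big_ord_recr /= IH; case: leqP => h; lia.
Qed.

Section Label2.
Variable n : nat.

Lemma cnt_from_label (x : bstring n) m :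
  cnt (bit x) m = \sum_(j < size (label x))
     ((j < m) && (nth 0 (label x) (size (label x) - 1 - j) <= m - 1 - j) : nat).
Proof.
have hle : cnt (bit x) m <= cnt (bit x) n \/ n <= m.
  case: (leqP m n) => h; [left; exact: cnt_mono | by right; lia].
have -> : cnt (bit x) m = \sum_(j < size (label x)) (j < cnt (bit x) m : nat).
  rewrite sum_lt_min size_label.
  case: hle => h; first by lia.
  have -> : cnt (bit x) m = cnt (bit x) n; last by lia.
  rewrite -(subnKC h); elim: (m - n) => [|d IH]; first by rewrite addn0.
  by rewrite addnS cntS IH bit_out ?addn0 //; lia.
rewrite size_label; apply: eq_bigr => [[j hj]] _ /=.
rewrite label_le; last by lia.
have -> : cnt (bit x) n - 1 - (cnt (bit x) n - 1 - j) = j by lia.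
case: (ltnP j m) => hjm /=.
  by have -> : j + (m - 1 - j) + 1 = m by lia.
by case: ltnP => // hh; have := cnt_le (bit x) m; lia.
Qed.

Lemma label_inj (x y : bstring n) : label x = label y -> x = y.
Proof.
move=> h.
have hc : forall m, cnt (bit x) m = cnt (bit y) m by move=> m; rewrite !cnt_from_label h.
apply/ffunP => i.
have := hc (nat_of_ord i).+1; rewrite !cntS hc !bitE.
case: (x i); case: (y i) => /=; lia.
Qed.

Lemma mem_Pplus l (lam : seq nat) :
  (lam \in Pplus l n) = [&& size lam == l, sorted geq lam & all (fun v => v <= n - l) lam].
Proof.
rewrite /Pplus mem_filter andbCA; congr andb.
apply/mapP/idP.
  move=> [tp _ ->]; rewrite size_map size_tuple eqxx /=.
  by apply/allP => v /mapP [i _ ->]; rewrite -ltnS ltn_ord.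
move=> /andP [/eqP hs /allP ha].
have hs' : size (map (fun v => inord v : 'I_(n - l).+1) lam) == l by rewrite size_map hs.
exists (Tuple hs'); first by rewrite mem_enum.
rewrite /= -map_comp map_id_in // => v hv /=.
by rewrite inordK // ltnS; apply: ha.
Qed.

Lemma uniq_Pplus l : uniq (Pplus l n).
Proof.
apply: filter_uniq; rewrite map_inj_uniq ?enum_uniq //.
by move=> t1 t2 /= /(inj_map val_inj) h; apply: val_inj.
Qed.

Lemma label_sorted (x : bstring n) : sorted geq (label x).
Proof.
apply/(sortedP 0) => k hk.
rewrite size_label in hk.
rewrite /geq /=.
set L := cnt (bit x) n in hk.
set c := nth 0 (label x) k.
have h1 := @label_le _ x k.+1 c hk.
have h2 := @label_le _ x k c (ltnW hk).
rewrite leqnn -/L in h2; rewrite h1 -/L.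
have e1 : L - 1 - k = (L - 1 - k.+1).+1 by lia.
rewrite e1 in h2.
set j := L - 1 - k.+1 in h2 *.
have e2 : j.+1 + c + 1 = (j + c + 1).+1 by lia.
rewrite e2 in h2.
move: h2; rewrite cntS; case: (bit x (j + c + 1)) => /=; lia.
Qed.

Lemma label_bound l (x : bstring n) : l <= n -> cnt (bit x) n = l ->
  all (fun v => v <= n - l) (label x).
Proof.
move=> hl hc; apply/(all_nthP 0) => k; rewrite size_label hc => hk.
rewrite label_le ?hc //.
have := cnt_lip (bit x) (_ : l - 1 - k + (n - l) + 1 <= n).
rewrite hc; lia.
Qed.

Lemma label_Pplus l (x : bstring n) : l <= n ->
  (label x \in Pplus l n) = (cnt (bit x) n == l).
Proof.
move=> hl; rewrite mem_Pplus size_label label_sorted /=.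
case: eqP => //= h; exact: label_bound.
Qed.

End Label2.

Section Exists.
Variable n : nat.

Lemma mono_count l (g : nat -> nat) v k :
  (forall k1 k2, k1 < k2 < l -> g k2 < g k1) -> k < l ->
  (l - 1 - k < \sum_(k' < l) (g k' < v : nat)) = (g k < v).
Proof.
move=> hg hk.
have hge : forall k', k' < l -> k' <= k -> g k <= g k'.
  move=> k' hk' hkk; case: (ltnP k' k) => h.
    by apply: ltnW; apply: hg; rewrite h hk.
  by have -> : k' = k by lia.
have hle : forall k', k' < l -> k <= k' -> g k' <= g k.
  move=> k' hk' hkk; case: (ltnP k k') => h.
    by apply: ltnW; apply: hg; rewrite h hk'.
  by have -> : k' = k by lia.
apply/idP/idP => h.
  apply/negPn/negP; rewrite -leqNgt => hv.
  have : \sum_(k' < l) (g k' < v : nat) <= \sum_(k' < l) (k.+1 <= k' : nat).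
    apply: leq_sum => [[k' hk']] _ /=.
    case: (ltnP k k') => hkk; first by case: (g k' < v).
    by rewrite ltnNge (leq_trans hv (hge _ hk' hkk)).
  rewrite sum_ge; lia.
have : \sum_(k' < l) (k <= k' : nat) <= \sum_(k' < l) (g k' < v : nat).
  apply: leq_sum => [[k' hk']] _ /=.
  case: (leqP k k') => hkk //=.
  by rewrite (leq_ltn_trans (hle _ hk' hkk) h).
rewrite sum_ge; lia.
Qed.

Lemma label_exists l mu : l <= n -> mu \in Pplus l n -> exists t : bstring n, label t = mu.
Proof.
move=> hl; rewrite mem_Pplus => /and3P [/eqP hs hsort /allP hall].
pose g k := nth 0 mu k + (l - 1 - k).
have hmono : forall k1 k2, k1 < k2 < l -> g k2 < g k1.
  move=> k1 k2 /andP [h12 h2l].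
  have geq_tr : transitive geq by move=> y x z h1 h2; exact: leq_trans h2 h1.
  have := sorted_leq_nth geq_tr (fun x => leqnn x) 0 hsort; rewrite hs => /(_ k1 k2).
  rewrite !inE => /(_ (ltn_trans h12 h2l) h2l (ltnW h12)).
  rewrite /geq /g; lia.
have hgb : forall k, k < l -> g k < n.
  move=> k hk; have : nth 0 mu k <= n - l by apply: hall; rewrite mem_nth // hs.
  rewrite /g; lia.
pose t : bstring n := [ffun i : 'I_n => [exists k : 'I_l, nat_of_ord i == g k]].
have hcnt : forall m, cnt (bit t) m = \sum_(k < l) (g k < m : nat).
  elim=> [|m IH].
    by rewrite cnt0 big1 // => k _.
  rewrite cntS IH.
  have -> : \sum_(k < l) (g k < m.+1 : nat) = \sum_(k < l) (g k < m : nat) + \sum_(k < l) (g k == m : nat).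
    by rewrite -big_split; apply: eq_bigr => k _ /=; rewrite ltnS leq_eqVlt; case: eqP; case: ltnP => //=; lia.
  congr addn.
  case hb: (bit t m).
    move: hb => /existsP [i /andP [/eqP hi]]; rewrite ffunE => /existsP [k0 /eqP hk0].
    rewrite (bigD1 k0) /=; last by [].
    rewrite -hk0 hi eqxx big1 // => k hk.
    case: eqP => // he; exfalso; move/eqP: hk; apply; apply: val_inj => /=.
    have hk1 := ltn_ord k; have hk2 := ltn_ord k0.
    case: (ltngtP k k0) => // hc.
      by have := hmono k k0; rewrite hc hk2 /=; lia.
    by have := hmono k0 k; rewrite hc hk1 /=; lia.
  rewrite big1 // => k _; case: eqP => // he; exfalso.
  have hmn : m < n by rewrite -he; apply: hgb.
  move: hb; rewrite -[m]/(nat_of_ord (Ordinal hmn)) bitE ffunE => /existsP; apply.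
  by exists k; rewrite /= he.
have hsz : size (label t) = l.
  rewrite size_label hcnt (eq_bigr (fun _ => 1)) ?sum1_card ?card_ord // => k _.
  by rewrite hgb.
exists t; apply: (@eq_from_nth _ 0); first by rewrite hsz hs.
move=> k; rewrite hsz => hk.
have hkc : k < cnt (bit t) n by rewrite -size_label hsz.
have E : forall c, (nth 0 (label t) k <= c) = (nth 0 mu k <= c).
  move=> c; rewrite label_le // -size_label hsz hcnt.
  rewrite (mono_count _ hmono hk) /g; lia.
apply/eqP; rewrite eqn_leq E leqnn -E leqnn.
by [].
Qed.

End Exists.


Lemma cnt_sat (f : nat -> bool) N m : (forall i, N <= i -> f i = false) -> N <= m -> cnt f m = cnt f N.
Proof.
move=> hf h; rewrite -(subnKC h); elim: (m - N) => [|d IH]; first by rewrite addn0.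
by rewrite addnS cntS IH hf ?addn0 //; lia.
Qed.

Lemma cnt_zero_mono (f : nat -> bool) m m' : m <= m' -> m - cnt f m <= m' - cnt f m'.
Proof. move=> h; have := cnt_lip f h; have := cnt_le f m; have := cnt_le f m'; lia. Qed.

Lemma card_set_sum (T : finType) (P : pred T) : #|[set x | P x]| = \sum_x (P x : nat).
Proof. by rewrite -sum1dep_card big_mkcond; apply: eq_bigr => x _; case: (P x). Qed.

Lemma cnt_neg (f : nat -> bool) m : cnt (fun i => ~~ f i) m = m - cnt f m.
Proof.
elim: m => [|m IH]; first by rewrite !cnt0.
rewrite !cntS IH; have := cnt_le f m; case: (f m) => /=; lia.
Qed.

Lemma card_sum (K : finType) (A : {set K}) : #|A| = \sum_k (k \in A : nat).
Proof. by rewrite -sum1_card big_mkcond; apply: eq_bigr => k _; case: (k \in A). Qed.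

Lemma sum_sub1 (I : finType) (A : {set I}) (f : I -> nat) : (forall h, h \in A -> 0 < f h) ->
  \sum_(h in A) (f h - 1) = \sum_(h in A) f h - #|A|.
Proof.
move=> hf; rewrite -sum1_card.
have -> : \sum_(h in A) f h = \sum_(h in A) (f h - 1) + \sum_(h in A) 1.
  by rewrite -big_split; apply: eq_bigr => h hh /=; have := hf h hh; lia.
by rewrite addnK.
Qed.

Section Core.
Variables (n l : nat) (s t : bstring n).
Hypothesis hl : l <= n.
Hypothesis hs : cnt (bit s) n = l.
Hypothesis ht : cnt (bit t) n = l.
Local Notation S := (cnt (bit s)).
Local Notation T := (cnt (bit t)).

Definition bb := skewd l n (label s) (label t).
Definition jx (x : 'I_l * 'I_(n - l)) := l - 1 - x.1.
Definition ix (x : 'I_l * 'I_(n - l)) := jx x + x.2 + 1.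
Definition aa m := S m < T m.
Definition V := forall m, S m <= T m <= S m + 1.

Lemma S_sat m : n <= m -> S m = l.
Proof. by move=> h; rewrite (@cnt_sat _ n) // => i hi; rewrite bit_out. Qed.
Lemma T_sat m : n <= m -> T m = l.
Proof. by move=> h; rewrite (@cnt_sat _ n) // => i hi; rewrite bit_out. Qed.

Lemma mem_bb x : (x \in bb) = (S (ix x) <= jx x < T (ix x)).
Proof.
rewrite /bb /skewd inE.
have hx := ltn_ord x.1.
rewrite (@label_le _ t); last by rewrite ht.
rewrite [x.2 < _]ltnNge (@label_le _ s); last by rewrite hs.
by rewrite hs ht -leqNgt /ix /jx andbC.
Qed.

Lemma aa_out m : n <= m -> aa m = false.
Proof. by move=> h; rewrite /aa S_sat // T_sat // ltnn. Qed.

Lemma aa0 : aa 0 = false.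
Proof. by rewrite /aa !cnt0. Qed.

Lemma zeros_bound m : m <= n -> m - S m <= n - l.
Proof. move=> h; have := cnt_lip (bit s) h; rewrite hs; have := cnt_le (bit s) m; lia. Qed.

Lemma memV x : V -> (x \in bb) = aa (ix x) && (S (ix x) == jx x).
Proof.
move=> hV; rewrite mem_bb /aa; have := hV (ix x); case/andP => h1 h2.
apply/idP/idP => [/andP [h3 h4]|/andP [h3 /eqP h4]]; apply/andP; split; lia.
Qed.

Lemma box_exists m : aa m -> exists2 x, x \in bb & ix x = m /\ S m = jx x.
Proof.
move=> ha.
have hmn : m <= n by case: (leqP m n) => // h; rewrite aa_out in ha => //; lia.
have hT := cnt_le (bit t) m.
have hTl : T m <= l by rewrite -ht; apply: cnt_mono.
move: ha; rewrite /aa => ha.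
have hk : l - 1 - S m < l by lia.
have hz := zeros_bound hmn.
have hc : m - 1 - S m < n - l by lia.
exists (Ordinal hk, Ordinal hc).
  rewrite mem_bb /ix /jx /=; have -> : l - 1 - (l - 1 - S m) + (m - 1 - S m) + 1 = m by lia.
  apply/andP; split; lia.
rewrite /ix /jx /=; split; lia.
Qed.

Lemma ix_inj : V -> {in bb &, injective ix}.
Proof.
move=> hV x y hx hy he.
rewrite !memV // in hx hy.
move: hx hy => /andP [_ /eqP hx] /andP [_ /eqP hy].
rewrite he in hx.
have hxy : jx x = jx y by rewrite -hx -hy.
move: he hxy {hx hy}; case: x => [[x1 hx1] [x2 hx2]]; case: y => [[y1 hy1] [y2 hy2]].
rewrite /ix /jx /= => he hx.
have e1 : x1 = y1 by lia.
have e2 : x2 = y2 by lia.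
subst; congr pair; exact: val_inj.
Qed.

Lemma card_boxes (Q : nat -> bool) : V ->
  #|[set x in bb | Q (ix x)]| = \sum_(m < n.+1) (aa m && Q m : nat).
Proof.
move=> hV.
have hb : forall x, x \in bb -> ix x < n.+1.
  move=> x; rewrite memV // => /andP [ha _]; rewrite ltnS.
  by case: (leqP (ix x) n) => // h; rewrite aa_out in ha => //; lia.
rewrite -(@card_in_imset _ _ (fun x => (inord (ix x) : 'I_n.+1))); last first.
  move=> x y /setIdP [hx _] /setIdP [hy _] /(f_equal val) /=.
  rewrite !inordK ?hb //; exact: ix_inj.
set Im := [set _ | _ in _].
have -> : Im = [set m : 'I_n.+1 | aa m && Q m].
  apply/setP => m; rewrite [in RHS]inE; apply/imsetP/idP.
    move=> [x /setIdP [hx hq] ->].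
    by rewrite inordK ?hb // hq andbT; move: hx; rewrite memV // => /andP [].
  move=> /andP [ha hq]; have [x hx [hi _]] := box_exists ha.
  exists x; first by apply/setIdP; rewrite hi.
  by apply: val_inj; rewrite /= inordK hi.
by rewrite -sum1dep_card big_mkcond /=; apply: eq_bigr => m _; case: (aa m && Q m).
Qed.


Lemma cntS_le (f : nat -> bool) m : cnt f m <= cnt f m.+1 <= cnt f m + 1.
Proof. by rewrite cntS; case: (f m) => /=; lia. Qed.

Lemma S_le_l m : S m <= l.
Proof. case: (leqP m n) => h; [rewrite -hs; exact: cnt_mono | by rewrite S_sat //; lia]. Qed.
Lemma T_le_l m : T m <= l.
Proof. case: (leqP m n) => h; [rewrite -ht; exact: cnt_mono | by rewrite T_sat //; lia]. Qed.

Lemma sub_iff : (forall m, S m <= T m) <-> subpart (label t) (label s).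
Proof.
split.
  move=> h; apply/allP => k; rewrite mem_iota size_label hs add0n => /andP [_ hk].
  set c := nth 0 (label s) k.
  have h1 := @label_le _ s k c; rewrite hs leqnn in h1; have {}h1 := esym (h1 hk).
  rewrite (@label_le _ t) ht //.
  exact: leq_trans h1 (h _).
move=> h m; apply/negPn/negP; rewrite -ltnNge => hlt.
have hSl := S_le_l m.
have hTm := cnt_le (bit t) m.
set j := T m in hlt hTm.
have hk : l - 1 - j < l by lia.
move/allP: h => /(_ (l - 1 - j)); rewrite mem_iota size_label hs add0n hk => /(_ isT) hle.
set c := m - 1 - j.
have h1 := @label_le _ s (l - 1 - j) c; rewrite hs in h1; have {}h1 := h1 hk.
have e : l - 1 - (l - 1 - j) = j by lia.
have e2 : j + c + 1 = m by have := cnt_le (bit s) m; rewrite /c; lia.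
rewrite e e2 hlt in h1.
have h2 := @label_le _ t (l - 1 - j) c; rewrite ht in h2; have {}h2 := h2 hk.
rewrite e e2 ltnn in h2.
have h3 : nth 0 (label s) (l - 1 - j) <= c by rewrite h1.
by move: (leq_trans hle h3); rewrite h2.
Qed.


Lemma mem_bb_at x m : ix x = m -> (x \in bb) = (S m <= jx x < T m).
Proof. by move=> <-; exact: mem_bb. Qed.

Lemma brh_iff : (forall m, S m <= T m) ->
  ((forall m, T m <= S m + 1) <-> broken_rim_hook bb).
Proof.
move=> hST; split.
  move=> hT; apply/negP => /existsP [x /existsP [y /andP [e1 /and5P [e2 hx hy _ _]]]].
  have E : ix y = ix x.
    move: e1 e2; case: x {hx hy} => [[x1 hx1] [x2 hx2]]; case: y => [[y1 hy1] [y2 hy2]].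
    rewrite /ix /jx /= => /eqP e1 /eqP e2; lia.
  rewrite mem_bb in hx; rewrite mem_bb E in hy.
  move: (hT (ix x)) (hST (ix x)) hx hy.
  move: (S (ix x)) (T (ix x)) => u v; clear E.
  move: e1 e2; case: x => [[x1 hx1] [x2 hx2]]; case: y => [[y1 hy1] [y2 hy2]].
  rewrite /jx /= => /eqP e1 /eqP e2 h5 h6 /andP [h1 h2] /andP [h3 h4].
  lia.
move=> hb m; apply/negPn/negP; rewrite -ltnNge => hlt.
have hTl := T_le_l m; have hTm := cnt_le (bit t) m.
have hmn : m <= n by case: (leqP m n) => // h; move: hlt; rewrite S_sat ?T_sat //; lia.
have hz := zeros_bound hmn.
have [hS1 hS2] := andP (cntS_le (bit s) m).
have [hT1 hT2] := andP (cntS_le (bit t) m).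
have em : m = (m - 1).+1 by lia.
have [hS3 hS4] := andP (cntS_le (bit s) (m - 1)); rewrite -em in hS3 hS4.
have [hT3 hT4] := andP (cntS_le (bit t) (m - 1)); rewrite -em in hT3 hT4.
have hx1 : l - 1 - (S m + 1) < l by lia.
have hy1 : l - 1 - (S m + 1) + 1 < l by lia.
have hx2 : m - 2 - S m < n - l by lia.
have hy2 : m - 2 - S m + 1 < n - l by lia.
move/negP: hb; apply; apply/existsP; exists (Ordinal hx1, Ordinal hx2).
apply/existsP; exists (Ordinal hy1, Ordinal hy2).
apply/andP; split; first by rewrite /= addn1. apply/and5P; split; first by rewrite /= addn1.
- by rewrite (@mem_bb_at _ m) /jx /=; [apply/andP; split; lia | rewrite /ix /jx /=; lia].
- by rewrite (@mem_bb_at _ m) /jx /=; [apply/andP; split; lia | rewrite /ix /jx /=; lia].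
- by rewrite (@mem_bb_at _ m.+1) /jx /=; [apply/andP; split; lia | rewrite /ix /jx /=; lia].
- by rewrite (@mem_bb_at _ (m - 1)) /jx /=; [apply/andP; split; lia | rewrite /ix /jx /=; lia].
Qed.


Definition nextA (a x y : bool) : bool :=
  match a, x, y with
  | false, true, false => true
  | true, false, true => false
  | a, _, _ => a
  end.

Lemma site i : V -> ty (aa i) (bit t i) (bit s i) != 0 /\ aa i.+1 = nextA (aa i) (bit t i) (bit s i).
Proof.
move=> hV; have := hV i; have := hV i.+1; rewrite /aa !cntS.
case: (bit t i); case: (bit s i) => /=; case: ltnP => h /=; lia.
Qed.

Fixpoint st (m : nat) : nat := if m is m'.+1 then (if aa m' then st m' else m) else 0.

Lemma stS m : aa m -> st m.+1 = st m.
Proof. by move=> h /=; rewrite h. Qed.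

Lemma st_le m : st m <= m.
Proof. elim: m => [|m IH] //=; case: (aa m); lia. Qed.

Lemma st_stable m d : (forall i, m <= i < m + d -> aa i) -> st (m + d) = st m.
Proof.
elim: d => [|d IH] h; first by rewrite addn0.
rewrite addnS stS; last by apply: h; lia.
by apply: IH => i hi; apply: h; lia.
Qed.

Lemma st_fix m : (st m.+1 == m.+1) = ~~ aa m.
Proof. rewrite /=; case h: (aa m) => /=; last by rewrite eqxx. by have := st_le m; lia. Qed.

Lemma st_prop m : aa m -> aa (st m) /\ st (st m) = st m.
Proof.
elim: m => [|m IH] /=; first by rewrite aa0.
case h: (aa m) => ha; first exact: IH.
by split => //=; rewrite h.
Qed.

Definition kap x := st (ix x).

Lemma badj_sym : ssrbool.symmetric (badj bb).
Proof.
move=> x y; rewrite /badj andbA [(x \in bb) && _]andbC -andbA; congr (_ && (_ && _)).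
move: (val x.1) (val x.2) (val y.1) (val y.2) => a b c d.
by rewrite (eq_sym c a) (eq_sym d b); congr orb; congr andb; apply: orbC.
Qed.

Lemma adj_kap x y : V -> badj bb x y -> kap x = kap y.
Proof.
move=> hV /and3P [hx hy hadj].
have hax : aa (ix x) by move: hx; rewrite memV // => /andP [].
have hay : aa (ix y) by move: hy; rewrite memV // => /andP [].
have : ix y = (ix x).+1 \/ ix x = (ix y).+1.
  move: hadj; case: x {hx hax} => [[x1 hx1] [x2 hx2]]; case: y {hy hay} => [[y1 hy1] [y2 hy2]].
  rewrite /ix /jx /= => /orP [/andP [/eqP e1 /orP [/eqP e2|/eqP e2]]|/andP [/eqP e1 /orP [/eqP e2|/eqP e2]]]; lia.
by rewrite /kap; case=> ->; rewrite stS.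
Qed.

Lemma connect_kap x y : V -> connect (badj bb) x y -> kap x = kap y.
Proof.
move=> hV /connectP [p hp ->]; elim: p x hp => [|z p IH] x //= /andP [hxz hp].
by rewrite (adj_kap hV hxz) IH.
Qed.

Lemma adj_consec w x : V -> w \in bb -> x \in bb -> ix x = (ix w).+1 -> badj bb w x.
Proof.
move=> hV hw hx he.
rewrite /badj hw hx /=.
have [h1 h2] := andP (cntS_le (bit s) (ix w)).
move: hw hx; rewrite !memV // => /andP [_ /eqP hw] /andP [_ /eqP hx].
rewrite he in hx.
move: (S (ix w)) (S (ix w).+1) hw hx h1 h2 => u v hw hx h1 h2.
move: he hw hx; case: w => [[w1 hw1] [w2 hw2]]; case: x => [[x1 hx1] [x2 hx2]].
rewrite /ix /jx /= => he hw hx.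
case: (ltnP u v) => huv.
  apply/orP; right; apply/andP; split; first by apply/eqP; lia.
  by apply/orP; left; apply/eqP; lia.
apply/orP; left; apply/andP; split; first by apply/eqP; lia.
by apply/orP; right; apply/eqP; lia.
Qed.

Lemma to_start d x z : V -> x \in bb -> z \in bb -> ix x - kap x = d -> ix z = kap x ->
  connect (badj bb) z x.
Proof.
move=> hV; elim: d x => [|d IH] x hx hz hd hzk.
  have hle := st_le (ix x); rewrite /kap in hd hzk.
  have -> : z = x by apply: (ix_inj hV) => //; lia.
  exact: connect0.
have hle := st_le (ix x); rewrite /kap in hd hzk.
have hpos : 0 < ix x by rewrite /ix; lia.
have em : ix x = (ix x).-1.+1 by lia.
have ha : aa (ix x).-1.
  apply/negPn/negP => hn; move: hd; rewrite em.
  by have := st_fix (ix x).-1; rewrite hn => /eqP ->; lia.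
have [w hw [hiw _]] := box_exists ha.
have hkw : kap w = kap x by rewrite /kap hiw em stS // -em.
apply: (connect_trans (y := w)).
  apply: IH => //; rewrite hkw /kap //; lia.
by apply: connect1; apply: adj_consec => //; lia.
Qed.

Lemma kap_connect x y : V -> x \in bb -> y \in bb -> kap x = kap y -> connect (badj bb) x y.
Proof.
move=> hV hx hy he.
have hax : aa (ix x) by move: hx; rewrite memV // => /andP [].
have [ha0 _] := st_prop hax.
have [z hz [hiz _]] := box_exists ha0.
have c1 := to_start hV hx hz erefl hiz.
have c2 : connect (badj bb) z y by apply: (to_start hV hy hz erefl); rewrite hiz -he.
rewrite (sym_connect_sym badj_sym) in c1.
exact: connect_trans c1 c2.
Qed.

Definition Cx x := [set y in bb | connect (badj bb) x y].

Lemma CxE x : V -> x \in bb -> Cx x = [set y in bb | kap y == kap x].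
Proof.
move=> hV hx; apply/setP => y; apply/setIdP/setIdP => [[hy hc]|[hy /eqP hk]]; split => //.
  by rewrite (connect_kap hV hc).
exact: kap_connect.
Qed.


Lemma st_between m1 m2 : m1 <= m2 -> (forall i, m1 <= i <= m2 -> aa i) -> st m2 = st m1.
Proof.
move=> h hi; rewrite -(subnKC h); apply: st_stable => i hh; apply: hi; lia.
Qed.

Lemma box_facts x : V -> x \in bb -> [/\ aa (ix x), S (ix x) = jx x & T (ix x) = (jx x).+1].
Proof.
move=> hV hx; move: (hx); rewrite memV // => /andP [ha /eqP he]; split => //.
by have := hV (ix x); move: ha; rewrite /aa; lia.
Qed.

Lemma same_row x z : V -> x \in bb -> z \in bb -> x.1 = z.1 -> kap x = kap z.
Proof.
move=> hV.
wlog hle : x z / ix x <= ix z.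
  move=> W hx hz he; case: (leqP (ix x) (ix z)) => h; first exact: W.
  by symmetry; apply: W; [exact: ltnW | exact: hz | exact: hx | rewrite he].
move=> hx hz he.
have [ha1 hs1 ht1] := box_facts hV hx; have [ha2 hs2 ht2] := box_facts hV hz.
have ej : jx z = jx x by rewrite /jx he.
rewrite /kap; symmetry; apply: st_between => // i /andP [h1 h2].
have := cnt_mono (bit s) h1; have := cnt_mono (bit s) h2.
have := cnt_mono (bit t) h1; have := cnt_mono (bit t) h2.
rewrite /aa; lia.
Qed.

Lemma same_col x z : V -> x \in bb -> z \in bb -> x.2 = z.2 -> kap x = kap z.
Proof.
move=> hV.
wlog hle : x z / ix x <= ix z.
  move=> W hx hz he; case: (leqP (ix x) (ix z)) => h; first exact: W.
  by symmetry; apply: W; [exact: ltnW | exact: hz | exact: hx | rewrite he].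
move=> hx hz he.
have [ha1 hs1 ht1] := box_facts hV hx; have [ha2 hs2 ht2] := box_facts hV hz.
have e1 : ix x = jx x + x.2 + 1 by [].
have e2 : ix z = jx z + x.2 + 1 by rewrite /ix he.
rewrite /kap; symmetry; apply: st_between => // i /andP [h1 h2].
have := cnt_zero_mono (bit s) h1; have := cnt_zero_mono (bit s) h2.
have := cnt_zero_mono (bit t) h1; have := cnt_zero_mono (bit t) h2.
have := cnt_le (bit s) i; have := cnt_le (bit t) i.
move: e1 e2 hs1 hs2 ht1 ht2; rewrite /aa.
move: (ix x) (ix z) (jx x) (jx z) (nat_of_ord x.2) => a b c d e.
lia.
Qed.

Lemma card_comps : V -> #|components bb| = \sum_(i < n) (~~ aa i && aa i.+1 : nat).
Proof.
move=> hV.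
set B0 := [set x in bb | st (ix x) == ix x].
have hcomp : components bb = [set Cx x | x in B0].
  apply/setP => C; apply/imsetP/imsetP => [[x hx ->]|[x /setIdP [hx _] ->]]; last by exists x.
  have [ha _ _] := box_facts hV hx.
  have [ha0 hid] := st_prop ha.
  have [z hz [hiz _]] := box_exists ha0.
  exists z; first by apply/setIdP; rewrite hiz hid.
  change (Cx x = Cx z); rewrite (CxE hV hx) (CxE hV hz) /kap hiz hid //.
rewrite hcomp card_in_imset; last first.
  move=> x y /setIdP [hx /eqP hx0] /setIdP [hy /eqP hy0] hC.
  have : y \in Cx x by rewrite hC (CxE hV hy); apply/setIdP; split.
  rewrite (CxE hV hx) => /setIdP [_ /eqP hk].
  by apply: (ix_inj hV) => //; rewrite -hx0 -hy0.
rewrite /B0 (card_boxes (fun m => st m == m)) // big_ord_recl aa0 /= add0n.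
by apply: eq_bigr => i _; rewrite /bump /= add1n st_fix andbC.
Qed.


Lemma row_empty i : V -> i < n -> bit t i ->
  [forall x in bb, val x.1 != l - 1 - T i] = ~~ aa i && bit s i.
Proof.
move=> hV hi hti.
have [hty hnext] := site i hV; rewrite hti in hty hnext.
have hTi1 : T i.+1 = (T i).+1 by rewrite cntS hti addn1.
have hTl := T_le_l i.+1.
case ha: (aa i) hty hnext => /=; case hsi: (bit s i) => //= _ hnext.
- (* (true,true,true) *)
  apply/negbTE/negP => /forallP hall.
  have [x hx [hix hsx]] := box_exists hnext.
  have := hall x; rewrite hx /= => /eqP; apply.
  have hS1 : S i.+1 = (S i).+1 by rewrite cntS hsi addn1.
  have := hV i; move: ha; rewrite /aa => ha.
  move: hsx; rewrite hS1 /jx; have := ltn_ord x.1; lia.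
- (* (false,true,true) *)
  apply/forallP => x; apply/implyP => hx; apply/negP => /eqP hx1.
  have [ha1 hs1 ht1] := box_facts hV hx.
  have hjx : jx x = T i by rewrite /jx hx1; lia.
  have hS1 : S i.+1 = (S i).+1 by rewrite cntS hsi addn1.
  have hST := hV i; move: ha; rewrite /aa => ha.
  case: (leqP (ix x) i) => hle.
    by have := cnt_mono (bit t) hle; lia.
  by have := cnt_mono (bit s) hle; lia.
- (* (false,true,false) *)
  apply/negbTE/negP => /forallP hall.
  have [x hx [hix hsx]] := box_exists hnext.
  have := hall x; rewrite hx /= => /eqP; apply.
  have hS1 : S i.+1 = S i by rewrite cntS hsi addn0.
  have := hV i; move: ha; rewrite /aa => ha.
  move: hsx; rewrite hS1 /jx; move/negbT: ha; rewrite -leqNgt => ha.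
  move: (ltn_ord x.1); move: (nat_of_ord x.1) => x1 hx1; lia.
Qed.

Lemma col_empty i : V -> i < n -> ~~ bit t i ->
  [forall x in bb, val x.2 != i - T i] = ~~ aa i && ~~ bit s i.
Proof.
move=> hV hi hti; move/negbTE: hti => hti.
have [hty hnext] := site i hV; rewrite hti in hty hnext.
have hTi1 : T i.+1 = T i by rewrite cntS hti addn0.
case ha: (aa i) hty hnext => /=; case hsi: (bit s i) => //= _ hnext.
- (* (true,false,true) and (true,false,false): box at i *)
  apply/negbTE/negP => /forallP hall.
  have [x hx [hix hsx]] := box_exists ha.
  have := hall x; rewrite hx /= => /eqP; apply.
  have [_ _ htx] := box_facts hV hx.
  move: htx hsx; rewrite hix; have := cnt_le (bit t) i; rewrite /ix in hix; lia.
- apply/negbTE/negP => /forallP hall.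
  have [x hx [hix hsx]] := box_exists ha.
  have := hall x; rewrite hx /= => /eqP; apply.
  have [_ _ htx] := box_facts hV hx.
  move: htx hsx; rewrite hix; have := cnt_le (bit t) i; rewrite /ix in hix; lia.
- (* (false,false,false) *)
  apply/forallP => x; apply/implyP => hx; apply/negP => /eqP hx2.
  have [ha1 hs1 ht1] := box_facts hV hx.
  have hS1 : S i.+1 = S i by rewrite cntS hsi addn0.
  have hST := hV i; move: ha; rewrite /aa => ha.
  have eix : ix x = jx x + (i - T i) + 1 by rewrite /ix hx2.
  case: (leqP (ix x) i) => hle.
    have := cnt_zero_mono (bit s) hle; have := cnt_le (bit t) i; lia.
  have := cnt_zero_mono (bit t) hle; have := cnt_le (bit t) i; lia.
Qed.


Definition tyA i := ty (aa i) (bit t i) (bit s i).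

Lemma rbar_eq : V -> rbar bb = \sum_(i < n) (tyA i == 3 : nat).
Proof.
move=> hV; rewrite /rbar card_set_sum (reindex_inj rev_ord_inj) /=.
transitivity (\sum_(j < T n) ([forall x in bb, val x.1 != l - 1 - j] : nat)).
  rewrite ht; apply: eq_bigr => j _; congr nat_of_bool; apply: eq_forallb => x.
  congr (_ ==> _); rewrite -val_eqE /=; have -> : l - 1 - j = l - j.+1 by lia.
  by [].
rewrite -(sum_cnt (bit t) (fun j => [forall x in bb, val x.1 != l - 1 - j])).
apply: eq_bigr => i _.
case hti: (bit t i); last by rewrite /tyA hti /=; case: (aa i); case: (bit s i).
rewrite /= row_empty //= /tyA hti.
by case: (aa i); case: (bit s i).
Qed.

Lemma cbar_eq : V -> cbar bb = \sum_(i < n) (tyA i == 1 : nat).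
Proof.
move=> hV; rewrite /cbar card_set_sum.
have hZ : cnt (fun i => ~~ bit t i) n = n - l by rewrite cnt_neg ht.
transitivity (\sum_(c < cnt (fun i => ~~ bit t i) n) ([forall x in bb, val x.2 != c] : nat)).
  rewrite hZ; apply: eq_bigr => c _; congr nat_of_bool; apply: eq_forallb => x.
rewrite -(sum_cnt (fun i => ~~ bit t i) (fun c => [forall x in bb, val x.2 != c])).
apply: eq_bigr => i _.
case hti: (bit t i); first by rewrite /tyA hti /=; case: (aa i); case: (bit s i).
rewrite /= cnt_neg col_empty ?hti //= /tyA hti.
by case: (aa i); case: (bit s i).
Qed.

Lemma card_bb : V -> #|bb| = \sum_(i < n) (aa i.+1 : nat).
Proof.
move=> hV.
rewrite -[LHS]/(#|bb|) (_ : #|bb| = #|[set x in bb | xpredT (ix x)]|); last first.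
  by apply: eq_card => x; apply/idP/setIdP => [|[]].
by rewrite (card_boxes xpredT hV) big_ord_recl aa0 /= add0n; apply: eq_bigr => i _; rewrite andbT.
Qed.


Lemma Cx_self x : x \in bb -> x \in Cx x.
Proof. by move=> hx; apply/setIdP; split => //; exact: connect0. Qed.

Lemma Cx_sub x z : z \in Cx x -> z \in bb.
Proof. by case/setIdP. Qed.

Lemma sum_proj (K : finType) (pr : 'I_l * 'I_(n - l) -> K) : V ->
  (forall x z, x \in bb -> z \in bb -> pr x = pr z -> kap x = kap z) ->
  \sum_(h in components bb) #|[set pr x | x in h]| = #|[set pr x | x in bb]|.
Proof.
move=> hV hpr.
under eq_bigr => h _ do rewrite card_sum.
rewrite exchange_big card_sum /=; apply: eq_bigr => k _.
case: (boolP (k \in [set pr x | x in bb])) => hk.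
  have [x0 hx0 ek] := imsetP hk.
  have hC0 : Cx x0 \in components bb by apply: imset_f.
  rewrite (bigD1 (Cx x0)) //= big1 ?addn0.
    by rewrite ek; apply/eqP; rewrite eqb1; apply: imset_f; exact: Cx_self.
  move=> h /andP [hh hne]; apply/eqP; rewrite eqb0; apply/negP => hkh.
  have [y hy ey] := imsetP hh; subst h.
  have [z hz ekz] := imsetP hkh.
  have {}hz : z \in Cx y := hz.
  move/negP: hne; apply; apply/eqP; change (Cx y = Cx x0).
  have hzb := Cx_sub hz.
  have hkz : kap z = kap y by move: hz; rewrite (CxE hV hy) => /setIdP [_ /eqP].
  have hk0 : kap z = kap x0 by apply: hpr => //; rewrite -ekz -ek.
  by rewrite (CxE hV hy) (CxE hV hx0) -hkz hk0.
rewrite big1 // => h hh; apply/eqP; rewrite eqb0; apply/negP => hkh.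
have [y hy ey] := imsetP hh; subst h.
have [z hz ekz] := imsetP hkh.
have {}hz : z \in Cx y := hz.
by move/negP: hk; apply; rewrite ekz; apply: imset_f; exact: Cx_sub hz.
Qed.

Lemma comp_pos (K : finType) (pr : 'I_l * 'I_(n - l) -> K) h :
  h \in components bb -> 0 < #|[set pr x | x in h]|.
Proof.
move=> hh; have [y hy ->] := imsetP hh.
by apply/card_gt0P; exists (pr y); apply: imset_f; exact: Cx_self.
Qed.

Lemma rows_count : l = #|[set x.1 | x in bb]| + rbar bb.
Proof.
rewrite /rbar.
have -> : [set i : 'I_l | [forall x in bb, x.1 != i]] = ~: [set x.1 | x in bb].
  apply/setP => k; rewrite !inE; apply/forallP/negP => [h /imsetP [x hx ek]|h x].
    by move: (h x); rewrite hx ek eqxx.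
  by apply/implyP => hx; apply/negP => /eqP ek; apply: h; rewrite -ek; apply: imset_f.
by rewrite cardsC card_ord.
Qed.

Lemma cols_count : n - l = #|[set x.2 | x in bb]| + cbar bb.
Proof.
rewrite /cbar.
have -> : [set i : 'I_(n - l) | [forall x in bb, x.2 != i]] = ~: [set x.2 | x in bb].
  apply/setP => k; rewrite !inE; apply/forallP/negP => [h /imsetP [x hx ek]|h x].
    by move: (h x); rewrite hx ek eqxx.
  by apply/implyP => hx; apply/negP => /eqP ek; apply: h; rewrite -ek; apply: imset_f.
by rewrite cardsC card_ord.
Qed.


Lemma site_sums i : V ->
  [/\ (tyA i == 6) = ~~ aa i && aa i.+1, (tyA i == 5) = aa i && ~~ aa i.+1,
      (bit t i : nat) = (tyA i == 2) + (tyA i == 3) + (tyA i == 6),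
      (~~ bit t i : nat) = (tyA i == 1) + (tyA i == 4) + (tyA i == 5) &
      (aa i.+1 : nat) = (tyA i == 2) + (tyA i == 4) + (tyA i == 6)].
Proof.
move=> hV; have [hty ->] := site i hV; move: hty; rewrite /tyA.
by case: (aa i); case: (bit t i); case: (bit s i).
Qed.

Definition Nty k := \sum_(i < n) (tyA i == k : nat).

Lemma exponents : V ->
  Nty 6 = #|components bb| /\ Nty 5 = #|components bb| /\
      Nty 3 = rbar bb /\ Nty 1 = cbar bb /\
      Nty 2 = \sum_(h in components bb) (nrows h).-1 /\
      Nty 4 = \sum_(h in components bb) (ncols h).-1 /\
      Nty 2 + Nty 4 + Nty 6 = #|bb|.
Proof.
move=> hV.
have e6 : Nty 6 = #|components bb|.
  by rewrite card_comps //; apply: eq_bigr => i _; have [-> _ _ _ _] := site_sums i hV.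
have e5 : Nty 5 = #|components bb|.
  rewrite -e6 /Nty.
  rewrite (eq_bigr (fun i : 'I_n => (aa i && ~~ aa i.+1 : nat))); last by move=> i _; have [_ -> _ _ _] := site_sums i hV.
  rewrite [RHS](eq_bigr (fun i : 'I_n => (~~ aa i && aa i.+1 : nat))); last by move=> i _; have [-> _ _ _ _] := site_sums i hV.
  have := balance aa n; rewrite aa0 aa_out // !addn0 => ->; by [].
have eones : Nty 2 + Nty 3 + Nty 6 = l.
  rewrite /Nty -!big_split /= -ht /cnt; apply: eq_bigr => i _.
  by have [_ _ -> _ _] := site_sums i hV.
have ezeros : Nty 1 + Nty 4 + Nty 5 = n - l.
  rewrite /Nty -!big_split /= -ht -cnt_neg /cnt; apply: eq_bigr => i _.
  by have [_ _ _ -> _] := site_sums i hV.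
have ebb : Nty 2 + Nty 4 + Nty 6 = #|bb|.
  rewrite card_bb // /Nty -!big_split /=; apply: eq_bigr => i _.
  by have [_ _ _ _ ->] := site_sums i hV.
have e3 := esym (rbar_eq hV); have e1 := esym (cbar_eq hV).
rewrite -/(Nty 3) in e3; rewrite -/(Nty 1) in e1.
do 4 (split => //); split; last split => //.
  rewrite (eq_bigr (fun h => nrows h - 1)); last by move=> h _; rewrite subn1.
  rewrite sum_sub1; last by move=> h hh; exact: comp_pos.
  rewrite (@sum_proj _ fst hV); last by move=> x z hx hz; exact: same_row.
  have := rows_count; move: (#|[set x.1 | x in bb]|) => A. rewrite -e3 -e6. lia.
rewrite (eq_bigr (fun h => ncols h - 1)); last by move=> h _; rewrite subn1.
rewrite sum_sub1; last by move=> h hh; exact: comp_pos.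
rewrite (@sum_proj _ snd hV); last by move=> x z hx hz; exact: same_col.
have := cols_count; move: (#|[set x.2 | x in bb]|) => A. rewrite -e1 -e5. lia.
Qed.

End Core.


Definition sigw (k : nat) : nat :=
  match k with 1 => 4 | 2 => 3 | 3 => 2 | 4 => 1 | 5 => 6 | 6 => 5 | _ => 0 end.

Lemma ty_sig a x y : ty (~~ a) y x = sigw (ty a x y).
Proof. by case: a; case: x; case: y. Qed.

Section Alg.
Variable R : numClosedFieldType.
Local Open Scope ring_scope.

Definition Nc n (f : nat -> nat) k := (\sum_(i < n) (f i == k : nat))%N.

Lemma prod_ty n (w : nat -> {mpoly R[6]}) (f : nat -> nat) :
  (forall i, (i < n)%N -> (0 < f i <= 6)%N) ->
  \prod_(i < n) w (f i) = w 1%N ^+ Nc n f 1 * w 2%N ^+ Nc n f 2 * w 3%N ^+ Nc n f 3 *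
                          w 4%N ^+ Nc n f 4 * w 5%N ^+ Nc n f 5 * w 6%N ^+ Nc n f 6.
Proof.
elim: n => [|n IH] hf.
  by rewrite big_ord0 /Nc !big_ord0 !expr0 !mulr1.
rewrite big_ord_recr /= IH; last by move=> i hi; apply: hf; lia.
rewrite /Nc !big_ord_recr /= !exprD.
move: (hf n (ltnSn n)); case: (f n) => [|[|[|[|[|[|[|k]]]]]]] //= _; rewrite ?expr0 ?expr1; ring.
Qed.

Lemma comp246X r (m : 'X_{1..6}) : comp246 r ('X_[m] : {mpoly R[6]}) = if deg246 m == r then 'X_[m] else 0.
Proof.
rewrite /comp246 msuppX big_cons big_nil.
by case: ifP => _; rewrite ?mcoeffX ?eqxx ?scale1r ?addr0.
Qed.

Lemma comp246_0 r : comp246 r (0 : {mpoly R[6]}) = 0.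
Proof. by rewrite /comp246 msupp0 big_nil. Qed.

Lemma deg246_sum n (g : nat -> 'I_6) : deg246 (\sum_(i < n) U_(g i))%MM = (\sum_(i < n) odd (g i))%N.
Proof.
rewrite /deg246.
rewrite (eq_bigr (fun k : 'I_6 => \sum_(i < n) (g i == k : nat))%N); last first.
  by move=> k _; rewrite mnm_sumE; apply: eq_bigr => i _; rewrite mnm1E.
rewrite exchange_big /=; apply: eq_bigr => i _.
rewrite big_mkcond (bigD1 (g i)) //= eqxx big1 ?addn0.
  by case: (odd (g i)).
by move=> k hk; case: (odd k) => //; rewrite eq_sym (negbTE hk).
Qed.

Lemma comp246_prod n r (f : nat -> nat) : (forall i, (i < n)%N -> (0 < f i <= 6)%N) ->
  comp246 r (\prod_(i < n) omega R (f i)) =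
  if ((\sum_(i < n) ~~ odd (f i))%N == r) then \prod_(i < n) omega R (f i) else 0.
Proof.
move=> hf.
have E : \prod_(i < n) omega R (f i) = 'X_[\sum_(i < n) U_(inord (f i).-1)]%MM.
  by rewrite -mprodXE.
rewrite E comp246X (@deg246_sum n (fun j => inord (f j).-1 : 'I_6)).
have -> : (\sum_(i < n) odd (inord (f i).-1 : 'I_6))%N = (\sum_(i < n) ~~ odd (f i))%N.
  apply: eq_bigr => i _; have /andP [h1 h2] := hf i (ltn_ord i).
  rewrite inordK; last by lia.
  by move: h1; case: (f i) => [|k] //= _; rewrite negbK.
by [].
Qed.

Lemma OmegaGenE (w1 w2 w3 w4 w5 w6 : {mpoly R[6]}) l n (b : {set 'I_l * 'I_(n - l)}) :
  OmegaGen w1 w2 w3 w4 w5 w6 b =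
  w1 ^+ cbar b * w2 ^+ (\sum_(h in components b) (nrows h).-1) * w3 ^+ rbar b *
  w4 ^+ (\sum_(h in components b) (ncols h).-1) * w5 ^+ #|components b| * w6 ^+ #|components b|.
Proof.
rewrite /OmegaGen big_split /= !prodrXr exprMn.
move: (w1 ^+ _) (w2 ^+ _) (w3 ^+ _) (w4 ^+ _) (w5 ^+ _) (w6 ^+ _) => a1 a2 a3 a4 a5 a6.
ring.
Qed.

End Alg.

Section Entries.
Variable R : numClosedFieldType.
Local Open Scope ring_scope.

Lemma Aop_closed n (s t : bstring n) : Aop R s t =
  if okb s t false n && ~~ auxb s t false n then \prod_(i < n) omega R (tyi s t false i) else 0.
Proof. by rewrite /Aop transfer Wf_closed; case: (auxb s t false n); rewrite ?andbT ?andbF. Qed.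

Lemma Dop_closed n (s t : bstring n) : Dop R s t =
  if okb s t true n && auxb s t true n then \prod_(i < n) omega R (tyi s t true i) else 0.
Proof. by rewrite /Dop transfer Wf_closed; case: (auxb s t true n); rewrite ?andbT ?andbF. Qed.

Lemma okbV n l (s t : bstring n) : (l <= n)%N -> cnt (bit s) n = l -> cnt (bit t) n = l ->
  (okb s t false n <-> V s t).
Proof.
move=> hl hs ht; split.
  move=> /allP hok m; case: (leqP m n) => hm.
    by have := hok m; rewrite mem_iota /= add0n ltnS hm => /(_ isT).
  by rewrite (S_sat hs) ?(T_sat ht) //; lia.
move=> hV; apply/allP => i _; exact: hV.
Qed.

Lemma okbV' n l (s t : bstring n) : (l <= n)%N -> cnt (bit s) n = l -> cnt (bit t) n = l ->
  (okb s t true n <-> V t s).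
Proof.
move=> hl hs ht; split.
  move=> /allP hok m; case: (leqP m n) => hm.
    have := hok m; rewrite mem_iota /= add0n ltnS hm => /(_ isT).
    rewrite /SS /TT; lia.
  by rewrite (S_sat hs) ?(T_sat ht) //; lia.
move=> hV; apply/allP => i _; have := hV i; rewrite /SS /TT /=; lia.
Qed.


Lemma tyA_range n l (s t : bstring n) i : (l <= n)%N -> cnt (bit s) n = l -> cnt (bit t) n = l ->
  V s t -> (0 < tyA s t i <= 6)%N.
Proof.
move=> hl hs ht hV; have [h _] := site hl hs ht i hV; move: h; rewrite /tyA.
by case: (aa s t i); case: (bit t i); case: (bit s i).
Qed.

Lemma A_entry l n (s t : bstring n) r : (l <= n)%N -> cnt (bit t) n = l ->
  comp246 r (Aop R s t) = if (label s \in Pplus l n) && is_brh l n (label s) (label t) r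
     then Omega R (skewd l n (label s) (label t)) else 0.
Proof.
move=> hl ht; rewrite label_Pplus // Aop_closed.
case hs: (cnt (bit s) n == l); last first.
  case: ifP => [/andP [hok hna]|_]; last by rewrite comp246_0.
  exfalso; have := okb_last hok; move: hna; rewrite /auxb /SS /TT /= => hna h.
  by move/negbT: hs => /eqP; apply; lia.
move/eqP: hs => hs /=.
have hna : ~~ auxb s t false n by rewrite /auxb /SS /TT /= hs ht ltnn.
rewrite hna andbT.
have hiff := okbV hl hs ht.
case hok: (okb s t false n); last first.
  rewrite comp246_0 /is_brh.
  case hsub: (subpart _ _) => //=; case hbrh: (broken_rim_hook _) => //=.
  exfalso; move/negbT: hok => /negP; apply; apply/hiff.
  have hST := (proj2 (sub_iff hl hs ht)) hsub.
  have hT := (proj2 (brh_iff hl hs ht hST)) hbrh.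
  by move=> m; rewrite hST hT.
have hV : V s t by apply/hiff.
have hST : forall m, (cnt (bit s) m <= cnt (bit t) m)%N by move=> m; case/andP: (hV m).
have hsub := (proj1 (sub_iff hl hs ht)) hST.
have hbrh := (proj1 (brh_iff hl hs ht hST)) (fun m => proj2 (andP (hV m))).
rewrite /is_brh hsub.
change (skewd l n (label s) (label t)) with (bb l s t).
rewrite hbrh /=.
have etyi : forall i, tyi s t false i = tyA s t i by [].
rewrite comp246_prod; last by move=> i _; rewrite etyi; exact: tyA_range hl hs ht hV.
have [e6 [e5 [e3 [e1 [e2 [e4 ebb]]]]]] := exponents hl hs ht hV.
have hdeg : (\sum_(i < n) ~~ odd (tyi s t false i))%N = #|bb l s t|.
  rewrite -ebb /Nty -!big_split; apply: eq_bigr => i _ /=; rewrite etyi.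
  have := tyA_range i hl hs ht hV.
  by case: (tyA s t i) => [|[|[|[|[|[|[|k]]]]]]].
rewrite hdeg; case: eqP => // _.
rewrite prod_ty; last by move=> i _; rewrite etyi; exact: tyA_range hl hs ht hV.
have eN : forall k, Nc n (tyi s t false) k = Nty s t k by [].
by rewrite !eN /Omega OmegaGenE e1 e2 e3 e4 e5 e6.
Qed.


Lemma D_entry l n (s t : bstring n) r : (l <= n)%N -> cnt (bit t) n = l -> (r <= n)%N ->
  comp246 r (Dop R s t) = if (label s \in Pplus l n) && is_brh l n (label t) (label s) (n - r)
     then Omegabar R (skewd l n (label t) (label s)) else 0.
Proof.
move=> hl ht hr; rewrite label_Pplus // Dop_closed.
case hs: (cnt (bit s) n == l); last first.
  case: ifP => [/andP [hok hna]|_]; last by rewrite comp246_0.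
  exfalso; have := okb_last hok; move: hna; rewrite /auxb /SS /TT /= => hna h.
  by move/negbT: hs => /eqP; apply; lia.
move/eqP: hs => hs /=.
have ha : auxb s t true n by rewrite /auxb /SS /TT /= hs ht; lia.
rewrite ha andbT.
have hiff := okbV' hl hs ht.
case hok: (okb s t true n); last first.
  rewrite comp246_0 /is_brh.
  case hsub: (subpart _ _) => //=; case hbrh: (broken_rim_hook _) => //=.
  exfalso; move/negbT: hok => /negP; apply; apply/hiff.
  have hST := (proj2 (sub_iff hl ht hs)) hsub.
  have hT := (proj2 (brh_iff hl ht hs hST)) hbrh.
  by move=> m; rewrite hST hT.
have hV : V t s by apply/hiff.
have hST : forall m, (cnt (bit t) m <= cnt (bit s) m)%N by move=> m; case/andP: (hV m).
have hsub := (proj1 (sub_iff hl ht hs)) hST.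
have hbrh := (proj1 (brh_iff hl ht hs hST)) (fun m => proj2 (andP (hV m))).
rewrite /is_brh hsub.
change (skewd l n (label t) (label s)) with (bb l t s).
rewrite hbrh /=.
have etyi : forall i, tyi s t true i = sigw (tyA t s i).
  move=> i; rewrite /tyi /tyA -ty_sig; congr ty.
  by rewrite /auxb /aa /SS /TT /= add1n ltnS leqNgt.
have hrange : forall i, (i < n)%N -> (0 < tyi s t true i <= 6)%N.
  move=> i _; rewrite etyi; have := tyA_range i hl ht hs hV.
  by case: (tyA t s i) => [|[|[|[|[|[|[|k]]]]]]].
rewrite comp246_prod //.
have [e6 [e5 [e3 [e1 [e2 [e4 ebb]]]]]] := exponents hl ht hs hV.
have hdeg0 : (\sum_(i < n) ~~ odd (tyA t s i))%N = #|bb l t s|.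
  rewrite -ebb /Nty -!big_split; apply: eq_bigr => i _ /=.
  have := tyA_range i hl ht hs hV.
  by case: (tyA t s i) => [|[|[|[|[|[|[|k]]]]]]].
have hdeg : (\sum_(i < n) ~~ odd (tyi s t true i))%N = (n - #|bb l t s|)%N.
  rewrite -hdeg0.
  have htot : forall i : 'I_n, (~~ odd (tyi s t true i) + ~~ odd (tyA t s i) = 1)%N.
    move=> i; rewrite etyi; have := tyA_range i hl ht hs hV.
    by case: (tyA t s i) => [|[|[|[|[|[|[|k]]]]]]].
  have : (\sum_(i < n) ~~ odd (tyi s t true i) + \sum_(i < n) ~~ odd (tyA t s i) = n)%N.
    rewrite -big_split /= (eq_bigr (fun _ => 1%N)); last by move=> i _; exact: htot.
    by rewrite sum1_card card_ord.
  lia.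
rewrite hdeg.
have hbn : (#|bb l t s| <= n)%N.
  rewrite -hdeg0; apply: (@leq_trans (\sum_(i < n) 1)%N); last by rewrite sum1_card card_ord.
  by apply: leq_sum => i _; apply: leq_b1.
have -> : ((n - #|bb l t s|)%N == r) = (#|bb l t s| == (n - r)%N) by apply/eqP/eqP; lia.
case: eqP => // _.
rewrite (eq_bigr (fun i : 'I_n => omega R (sigw (tyA t s i)))); last by move=> i _; rewrite etyi.
rewrite (prod_ty (fun k => omega R (sigw k))); last by move=> i _; exact: tyA_range hl ht hs hV.
have eN : forall k, Nc n (tyA t s) k = Nty t s k by [].
by rewrite !eN /Omegabar OmegaGenE e1 e2 e3 e4 e5 e6.
Qed.

End Entries.


Local Open Scope ring_scope.

Lemma sum_pick (R : numClosedFieldType) (r : seq (seq nat)) (P : pred (seq nat))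
    (G : seq nat -> {mpoly R[6]}) (x : seq nat) : uniq r ->
  \sum_(lam <- r | P lam) G lam * ((x == lam) : nat)%:R = if (x \in r) && P x then G x else 0.
Proof.
move=> hu; rewrite big_mkcond /=.
case hx: (x \in r) => /=.
  rewrite (bigD1_seq x) //= eqxx big1_seq ?addr0.
    by case: (P x); rewrite ?mulr1.
  move=> lam /andP [hne _]; rewrite eq_sym (negbTE hne) /=.
  by case: (P lam); rewrite ?mulr0.
rewrite big1_seq // => lam /andP [_ hl].
have -> : (x == lam) = false by apply/negbTE; apply: contraFN hx => /eqP ->.
by case: (P lam); rewrite ?mulr0.
Qed.

Lemma opapply_pick (R : numClosedFieldType) n (t0 : bstring n) (F : bstring n -> bstring n -> {mpoly R[6]}) :
  opapply F (vlab R n (label t0)) = [ffun s => F s t0].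
Proof.
apply/ffunP => s; rewrite !ffunE (bigD1 t0) //= ffunE eqxx mulr1 big1 ?addr0 //.
move=> t ht; rewrite ffunE.
have -> : (label t == label t0) = false.
  by apply/negbTE; apply: contra ht => /eqP /label_inj ->.
by rewrite mulr0.
Qed.

Theorem proposition4p5 (R : numClosedFieldType) (l n : nat) (mu : seq nat) :
  (l <= n)%N -> mu \in Pplus l n ->
  (forall r : nat, (r <= n - 1)%N ->
     opapply (fun s t => comp246 r (Aop R s t)) (vlab R n mu) =
     [ffun s : bstring n => \sum_(lam <- Pplus l n | is_brh l n lam mu r)
                  Omega R (skewd l n lam mu) * vlab R n lam s]) /\
  (forall r : nat, ((1 <= r <= n) || (r == n))%N ->
     opapply (fun s t => comp246 r (Dop R s t)) (vlab R n mu) =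
     [ffun s : bstring n => \sum_(lam <- Pplus l n | is_brh l n mu lam (n - r))
                  Omegabar R (skewd l n mu lam) * vlab R n lam s]).
Proof.
move=> hl hmu.
have [t0 ht0] := label_exists hl hmu.
have hc0 : cnt (bit t0) n = l.
  by move: hmu; rewrite -ht0 label_Pplus // => /eqP.
subst mu.
split => r hr; rewrite opapply_pick; apply/ffunP => s; rewrite !ffunE.
  rewrite (eq_bigr (fun lam => Omega R (skewd l n lam (label t0)) * ((label s == lam) : nat)%:R));
    last by move=> lam _; rewrite ffunE.
  by rewrite sum_pick ?uniq_Pplus // (A_entry _ _ _ hl hc0).
rewrite (eq_bigr (fun lam => Omegabar R (skewd l n (label t0) lam) * ((label s == lam) : nat)%:R));
  last by move=> lam _; rewrite ffunE.
rewrite sum_pick ?uniq_Pplus // (@D_entry R l n s t0 r hl hc0) //.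
by move: hr => /orP [/andP [_ ->]|/eqP ->].
Qed.
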